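(* Let $M,N$ be indecomposable non-projective $A_n^\ell$-modules and let $f\in\mathrm{Hom}(M,N)$ be nonzero with $\mathrm{Im} f=\mathrm{rad}^t(N)$, where $t$ is an integer such that there is no epimorphism from $M$ onto $\mathrm{rad}^s(N)$ for any $s<t$. Then $\underline{f}=0$ if and only if $\underline{\mathrm{Hom}}(M,N)=0$.
   Context: $A_n^\ell=kQ/I$ ($k$ algebraically closed), $Q$ the cyclic quiver with vertices $1,\dots,n$ and arrows $i\to i+1$, $n\to 1$, $I$ generated by all paths of length $\ell+1$. $\underline{\mathrm{Hom}}(M,N)$ is $\mathrm{Hom}(M,N)$ modulo morphisms factoring through projective modules, and $\underline{f}$ is the class of $f$ there. *)

(* Defs.v *)
(* Modules over A_n^l = kQ/I, Q the cyclic quiver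
   1 -> 2 -> ... -> n -> 1 (vertices indexed by 'I_n, arrow i -> ordS i),
   I generated by all paths of length l+1.
   A (finite-dimensional) module is given concretely as a representation:
   the space k^d (row vectors), the action of the vertex idempotents e_i
   (matrices E i) and of the sum X of all arrows (X = \sum_i a_i), subject
   to the defining relations of kQ/I.  Right action: v |-> v *m E i, v *m X. *)
From HB Require Import structures.
From mathcomp Require Import all_boot all_order all_algebra.
Set Implicit Arguments. Unset Strict Implicit. Unset Printing Implicit Defensive.
Import Order.TTheory GRing.Theory.
Local Open Scope ring_scope.

Record amod (k : fieldType) (n l : nat) := AMod {
  adim : nat;
  aE : 'I_n -> 'M[k]_adim;
  aX : 'M[k]_adim;
  aE_orth : forall i j : 'I_n, aE i *m aE j = (if i == j then aE i else 0);
  aE_sum : \sum_(i < n) aE i = 1%:M;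
  aX_arrow : forall i : 'I_n, aE i *m aX = aE i *m aX *m aE (ordS i);
  aX_nil : aX ^+ l.+1 = 0 }.

Arguments adim {k n l}.
Arguments aE {k n l}.
Arguments aX {k n l}.

Section Defs.
Variables (k : fieldType) (n l : nat).

Definition is_hom (M N : amod k n l) (F : 'M[k]_(adim M, adim N)) : Prop :=
  (forall i : 'I_n, aE M i *m F = F *m aE N i) /\ aX M *m F = F *m aX N.

Definition projective (P : amod k n l) : Prop :=
  forall (B C : amod k n l) (g : 'M[k]_(adim B, adim C))
         (h : 'M[k]_(adim P, adim C)),
    is_hom g -> row_full g -> is_hom h ->
    exists u : 'M[k]_(adim P, adim B), is_hom u /\ u *m g = h.

Definition submodule (M : amod k n l) (U : 'M[k]_(adim M)) : Prop :=
  (forall i : 'I_n, (U *m aE M i <= U)%MS) /\ (U *m aX M <= U)%MS.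

Definition indecomposable (M : amod k n l) : Prop :=
  (0 < adim M)%N /\
  forall U W : 'M[k]_(adim M), submodule U -> submodule W ->
    (U + W == (1%:M : 'M[k]_(adim M)))%MS ->
    (U :&: W == (0 : 'M[k]_(adim M)))%MS ->
    (U == (0 : 'M[k]_(adim M)))%MS \/ (W == (0 : 'M[k]_(adim M)))%MS.

(* rad^t(N) = N J^t, J the arrow ideal (= rad A): the row space of X^t *)
Definition radpow (N : amod k n l) (t : nat) : 'M[k]_(adim N) := aX N ^+ t.

Definition stably_zero (M N : amod k n l) (F : 'M[k]_(adim M, adim N)) : Prop :=
  exists (P : amod k n l) (G : 'M[k]_(adim M, adim P)) (H : 'M[k]_(adim P, adim N)),
    projective P /\ is_hom G /\ is_hom H /\ F = G *m H.

End Defs.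

(* Main.v *)
Require Import Defs.
From HB Require Import structures.
From mathcomp Require Import all_boot all_order all_algebra.
From mathcomp Require Import zify.
Set Implicit Arguments. Unset Strict Implicit. Unset Printing Implicit Defensive.
Import GRing.Theory.
Local Open Scope ring_scope.

Section Basic.
Variables (k : fieldType) (n l : nat) (V : amod k n l).
Local Notation d := (adim V).
Local Notation E := (aE V).
Local Notation X := (aX V).

Lemma XE j : X *m E (ordS j) = E j *m X.
Proof.
rewrite -[X in LHS]mul1mx -(aE_sum V) mulmx_suml mulmx_suml (bigD1 j) //= big1 ?addr0.
  by rewrite -aX_arrow.
move=> r rj; rewrite aX_arrow -mulmxA aE_orth.
by rewrite (inj_eq (@ordS_inj n)) (negbTE rj) mulmx0.
Qed.

Lemma Xpow_mul p q : X ^+ p *m X ^+ q = X ^+ (p + q).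
Proof. by rewrite mulmxE exprD. Qed.

Lemma EXp p j : E j *m X ^+ p = X ^+ p *m E (iter p (@ordS n) j).
Proof.
elim: p j => [|p IH] j /=; first by rewrite expr0 mulmx1 mul1mx.
by rewrite exprSr -mulmxE mulmxA IH -mulmxA -XE mulmxA.
Qed.

Lemma EE i : E i *m E i = E i.
Proof. by rewrite aE_orth eqxx. Qed.

Lemma vertexX (v : 'rV[k]_d) i p j : v *m E i = v ->
  v *m X ^+ p *m E j = if j == iter p (@ordS n) i then v *m X ^+ p else 0.
Proof.
move=> vE; rewrite -{1}vE -(mulmxA v). rewrite EXp !mulmxA -(mulmxA _ (E _)) aE_orth eq_sym.
by case: ifP => _; rewrite ?mulmx0 // -mulmxA -EXp mulmxA vE.
Qed.

Lemma Xnil q : (l < q)%N -> X ^+ q = 0.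
Proof. by move=> lq; rewrite -(subnKC lq) -Xpow_mul (aX_nil V) mul0mx. Qed.

Lemma XS q : X *m X ^+ q = X ^+ q.+1.
Proof. by rewrite mulmxE -exprS. Qed.

Lemma XSr q : X ^+ q *m X = X ^+ q.+1.
Proof. by rewrite mulmxE -exprSr. Qed.

Definition Bm (v : 'rV[k]_d) : 'M_(l.+1, d) := \matrix_(p < l.+1) (v *m X ^+ p).


Lemma cyclic : indecomposable V ->
  exists i v, v *m E i = v /\ (1%:M <= Bm v)%MS.
Proof.
case=> d_gt0 Hind.
have exP : exists p, X ^+ p.+1 == 0 by exists l; rewrite (aX_nil V).
case: (ex_minnP exP) => a /eqP Xa0 amin.
have al : (a <= l)%N by apply: amin; rewrite aX_nil.
have Xa : X ^+ a != 0.
  case: a Xa0 amin al => [|b] _ amin _.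
    rewrite expr0; apply/eqP => H1.
    have := congr1 (fun A : 'M[k]_d => A (Ordinal d_gt0) (Ordinal d_gt0)) H1.
    by rewrite /= !mxE eqxx /= => /eqP; rewrite oner_eq0.
  apply/negP => /eqP H1; have := amin b; rewrite H1 eqxx => /(_ isT).
  by rewrite ltnn.
have [i Ei] : exists i, E i *m X ^+ a != 0.
  apply/existsP; apply: contraR Xa => /existsPn H.
  rewrite -[X ^+ a]mul1mx -(aE_sum V) mulmx_suml big1 // => j _.
  exact/eqP/negbNE/H.
have [j0 Hj0] : exists j0, row j0 (E i *m X ^+ a) != 0.
  apply/existsP; apply: contraR Ei => /existsPn H.
  apply/eqP/row_matrixP => r; rewrite row0; exact/eqP/negbNE/H.
pose v := row j0 (E i).
have vE : v *m E i = v by rewrite -row_mul EE.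
have vXa : v *m X ^+ a != 0 by rewrite -row_mul.
have [i2 Eis] : exists i2, v *m X ^+ a *m E i2 != 0.
  apply/existsP; apply: contraR vXa => /existsPn H.
  rewrite -[v *m X ^+ a]mulmx1 -(aE_sum V) mulmx_sumr big1 // => j _.
  exact/eqP/negbNE/H.
have [j1 Hj1] : exists j1, (v *m X ^+ a *m E i2) 0 j1 != 0.
  apply/existsP; apply: contraR Eis => /existsPn H.
  apply/eqP/matrixP => r s; rewrite (ord1 r) [RHS]mxE; exact/eqP/negbNE/H.
pose c : 'cV[k]_d := E i2 *m delta_mx j1 0.
pose g := (v *m X ^+ a *m c) 0 0.
have g0 : g != 0 by rewrite /g /c mulmxA -colE mxE.
have Xnila q : (a < q)%N -> X ^+ q = 0.
  by move=> aq; rewrite -(subnKC aq) -Xpow_mul Xa0 mul0mx.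
pose B : 'M[k]_(a.+1, d) := \matrix_(p < a.+1) (v *m X ^+ (a - p)).
pose C : 'M[k]_(d, a.+1) := \matrix_(r, q) (X ^+ q *m c) r 0.
have key (u : 'rV[k]_d) (q : 'I_a.+1) : (u *m C) 0 q = (u *m X ^+ q *m c) 0 0.
  rewrite -mulmxA !mxE; apply: eq_bigr => r _; by rewrite mxE.
have uC0 (u : 'rV[k]_d) : u *m C = 0 <-> forall q, (q <= a)%N -> u *m X ^+ q *m c = 0.
  split=> [H q qa|H].
    apply/matrixP => r s; rewrite (ord1 r) (ord1 s) [RHS]mxE.
    have := congr1 (fun A : 'rV_(a.+1) => A 0 (Ordinal (qa : (q < a.+1)%N))) H.
    by rewrite key => ->; rewrite mxE.
  apply/matrixP => r q; rewrite (ord1 r) key [RHS]mxE.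
  by rewrite H ?mxE // -ltnS.
pose H := B *m C.
have Hpq (p q : 'I_a.+1) : H p q = (v *m X ^+ (a - p) *m X ^+ q *m c) 0 0.
  transitivity ((row p B *m C) 0 q); first by rewrite -row_mul [RHS]mxE.
  by rewrite rowK key.
have Htrig : is_trig_mx H.
  apply/is_trig_mxP => p q pq; rewrite Hpq -(mulmxA v) Xpow_mul Xnila ?mulmx0 ?mul0mx ?mxE //.
  have := ltn_ord p; lia.
have Hunit : H \in unitmx.
  rewrite unitmxE (det_trig Htrig) unitfE.
  rewrite (eq_bigr (fun=> g)) ?prodr_const ?expf_neq0 // => p _.
  by rewrite Hpq -(mulmxA v) Xpow_mul subnK // -ltnS.
have rowB p : row p B = v *m X ^+ (a - p) by rewrite rowK.
pose U := kermx C.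
have sU : submodule U.
  split.
    move=> j; apply/row_subP => r; rewrite row_mul; apply/sub_kermxP; apply/uC0 => q qa.
    have uC : row r U *m C = 0 by apply/sub_kermxP; exact: row_sub.
    rewrite -(mulmxA (row r U)) EXp /c !mulmxA -(mulmxA _ _ (E i2)) aE_orth.
    case: eqP => [->|_]; last by rewrite mulmx0 mul0mx.
    by rewrite -mulmxA; exact: (proj1 (uC0 _) uC q qa).
  apply/row_subP => r; rewrite row_mul; apply/sub_kermxP; apply/uC0 => q qa.
  have uC : row r U *m C = 0 by apply/sub_kermxP; exact: row_sub.
  rewrite -(mulmxA (row r U)) XS.
  case: (ltnP q a) => qa'; first exact: (proj1 (uC0 _) uC q.+1 qa').
  by rewrite Xnila ?mulmx0 ?mul0mx // ltnS.
have sB j : (B *m E j <= B)%MS /\ (B *m X <= B)%MS.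
  split; apply/row_subP => p; rewrite row_mul rowB.
    rewrite (vertexX _ _ vE); case: ifP => _; last exact: sub0mx.
    by rewrite -rowB row_sub.
  rewrite -mulmxA XSr.
  case: (ltnP 0 p) => hp.
    have pl : (p.-1 < a.+1)%N by apply: leq_ltn_trans (leq_pred p) (ltn_ord p).
    have -> : ((a - p).+1 = a - p.-1)%N by have := ltn_ord p; lia.
    by rewrite -[p.-1]/(nat_of_ord (Ordinal pl)) -rowB row_sub.
  by rewrite Xnila ?mulmx0 ?sub0mx //; lia.
have genB : submodule <<B>>%MS.
  split => [j|]; rewrite (eqmxMr _ (genmxE B)) genmxE; [exact (sB j).1 | exact (sB i).2].
have sum : (<<B>> + U == 1%:M)%MS.
  apply/andP; split; first exact: submx1.
  pose P := C *m invmx H *m B.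
  have -> : (1%:M : 'M[k]_d) = P + (1%:M - P) by rewrite addrC subrK.
  apply: addmx_sub_adds; first by rewrite genmxE submxMl.
  apply/sub_kermxP; rewrite mulmxBl mul1mx /P -!mulmxA -/H.
  by rewrite mulVmx // mulmx1 subrr.
have cap : (<<B>> :&: U == (0 : 'M[k]_d))%MS.
  apply/andP; split; last exact: sub0mx.
  apply/row_subP => r; set x := row r _.
  have : (x <= <<B>> :&: U)%MS by exact: row_sub.
  rewrite sub_capmx genmxE => /andP[xB /sub_kermxP xC].
  have xe := mulmxKpV xB.
  have : x *m pinvmx B *m H = 0 by rewrite /H mulmxA xe xC.
  move/(congr1 (mulmx^~ (invmx H))); rewrite mulmxK // mul0mx => b0.
  by rewrite -xe b0 mul0mx sub0mx.
case: (Hind _ _ genB sU sum cap) => [/andP[W0 _]|/andP[U0 _]].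
  rewrite genmxE in W0.
  have := submx_trans (row_sub 0 B) W0; rewrite submx0 rowB subn0.
  by rewrite (negbTE vXa).
exists i, v; split => //.
have s1 : (1%:M <= <<B>> + U)%MS by case/andP: sum.
have s2 : (<<B>> + U <= B)%MS.
  by rewrite addsmx_sub genmxE submx_refl (submx_trans U0 (sub0mx _ _)).
apply: submx_trans (submx_trans s1 s2) _.
apply/row_subP => p; rewrite rowB.
have pl : (a - p < l.+1)%N by rewrite ltnS; apply: leq_trans (leq_subr _ _) al.
rewrite -(rowK (fun q : 'I_l.+1 => v *m X ^+ q) (Ordinal pl)).
exact: row_sub.
Qed.

End Basic.

Section Main.
Variables (k : fieldType) (n l : nat) (M N : amod k n l).

Lemma hom_Xp (F : 'M[k]_(adim M, adim N)) p :
  is_hom F -> aX M ^+ p *m F = F *m aX N ^+ p.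
Proof.
case=> _ hX; elim: p => [|p IH]; first by rewrite !expr0 mul1mx mulmx1.
by rewrite -XSr -mulmxA hX mulmxA IH -mulmxA XSr.
Qed.

Lemma hom_comp (P : amod k n l) (F : 'M[k]_(adim M, adim P)) (G : 'M[k]_(adim P, adim N)) :
  is_hom F -> is_hom G -> is_hom (F *m G).
Proof.
case=> hE hX [gE gX]; split; last by rewrite mulmxA hX -mulmxA gX mulmxA.
by move=> i; rewrite mulmxA hE -mulmxA gE mulmxA.
Qed.

Lemma rowBmA (m : 'rV[k]_(adim M)) (A : 'M[k]_(adim M, adim N)) p :
  is_hom A -> row p (Bm m *m A) = (m *m A) *m aX N ^+ p.
Proof. by move=> hA; rewrite row_mul rowK -mulmxA hom_Xp // mulmxA. Qed.

Lemma Bm_inj (m : 'rV[k]_(adim M)) (A A' : 'M[k]_(adim M, adim N)) :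
  (1%:M <= Bm m)%MS -> Bm m *m A = Bm m *m A' -> A = A'.
Proof.
move=> Bf e; have := mulmxKpV Bf; rewrite mul1mx => e1.
by rewrite -[A]mul1mx -[A']mul1mx -e1 -!mulmxA e.
Qed.

Lemma imG (m : 'rV[k]_(adim M)) (w : 'rV[k]_(adim N)) (G : 'M[k]_(adim M, adim N)) s :
   is_hom G -> (1%:M <= Bm m)%MS -> (1%:M <= w + aX N)%MS ->
   (m *m G <= aX N ^+ s)%MS -> ~~ (m *m G <= aX N ^+ s.+1)%MS ->
   (G == aX N ^+ s)%MS.
Proof.
move=> hG Bf Nw gXs gn.
set g := m *m G in gXs gn.
set BG := Bm m *m G.
have G_BG : (G <= BG)%MS by rewrite -{1}[G]mul1mx submxMr.
have BG_G : (BG <= G)%MS by exact: submxMl.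
have step r : (aX N ^+ r <= w *m aX N ^+ r + aX N ^+ r.+1)%MS.
  have e1 : aX N ^+ r = 1%:M *m aX N ^+ r by rewrite mul1mx.
  rewrite {1}e1; apply: submx_trans (submxMr _ Nw) _.
  by rewrite addsmxMr XS.
apply/andP; split.
  apply: submx_trans G_BG _; apply/row_subP => p; rewrite /BG rowBmA //.
  apply: submx_trans (submxMr _ gXs) _.
  by rewrite Xpow_mul addnC -Xpow_mul submxMl.
apply: submx_trans _ BG_G.
have := submx_trans gXs (step s); case/sub_addsmxP => [[u1 u2]] /= ge.
set cc := u1 0 0.
have ge' : g = cc *: (w *m aX N ^+ s) + u2 *m aX N ^+ s.+1.
  by rewrite ge {1}(mx11_scalar u1) mul_scalar_mx.
have cc0 : cc != 0.
  apply: contraNneq gn => cc0; by rewrite ge' cc0 scale0r add0r submxMl.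
have wXs : w *m aX N ^+ s = cc^-1 *: (g - u2 *m aX N ^+ s.+1).
  by rewrite ge' addrK scalerA mulVf // scale1r.
case: (leqP s l.+1) => sl; last by rewrite Xnil ?sub0mx // ltnW.
suff H : forall e r, (r + e = l.+1)%N -> (s <= r)%N -> (aX N ^+ r <= BG)%MS.
  by apply: (H (l.+1 - s)%N) => //; lia.
elim=> [|e IH] r re sr.
  by rewrite addn0 in re; rewrite re (aX_nil N) sub0mx.
have IH' : (aX N ^+ r.+1 <= BG)%MS by apply: IH; lia.
apply: submx_trans (step r) _; rewrite addsmx_sub IH' andbT.
rewrite -(subnKC sr) -Xpow_mul mulmxA wXs -scalemxAl scalemx_sub //.
rewrite mulmxBl addmx_sub //.
  have rl : (r - s < l.+1)%N by lia.
  by rewrite -[(r - s)%N]/(nat_of_ord (Ordinal rl)) -rowBmA // row_sub.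
rewrite eqmx_opp -mulmxA Xpow_mul.
have -> : (s.+1 + (r - s) = r.+1)%N by lia.
exact: submx_trans (submxMl _ _) IH'.
Qed.

End Main.

Unset Implicit Arguments.

Theorem lemma2p8 (k : closedFieldType) (n l : nat) (M N : amod k n l) :
  (0 < n)%N ->
  indecomposable M -> indecomposable N ->
  ~ projective M -> ~ projective N ->
  forall (t : nat) (F : 'M[k]_(adim M, adim N)),
    is_hom F -> F != 0 ->
    (F == radpow N t)%MS ->
    (forall s : nat, (s < t)%N ->
       ~ exists G : 'M[k]_(adim M, adim N), is_hom G /\ (G == radpow N s)%MS) ->
    (stably_zero F <->
     forall G : 'M[k]_(adim M, adim N), is_hom G -> stably_zero G).
Proof.
move=> _ indM indN _ _ t F homF _ FX Hmin.
split; last by move=> H; exact: H F homF.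
case=> [P [G1 [H1 [projP [hG1 [hH1 FGH]]]]]] G homG.
have [i [m [mE Bf]]] := cyclic indM.
have [j [w [wE Nf]]] := cyclic indN.
have Nw : (1%:M <= w + aX N)%MS.
  apply: submx_trans Nf _; apply/row_subP => p; rewrite rowK.
  case: p => [[|p] hp] /=; first by rewrite expr0 mulmx1 addsmxSl.
  by rewrite -XSr mulmxA; apply: submx_trans (submxMl _ _) (addsmxSr _ _).
pose g := m *m G.
have gXt : (g <= aX N ^+ t)%MS.
  suff H s : (s <= t)%N -> (g <= aX N ^+ s)%MS by exact: H.
  elim: s => [|s IH] st; first by rewrite expr0 submx1.
  have gs := IH (ltnW st).
  case: (boolP (g <= aX N ^+ s.+1)%MS) => // gn.
  exfalso; apply: (Hmin s st); exists G; split => //.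
  exact: (imG homG Bf Nw gs gn).
have gF : (g <= F)%MS by apply: submx_trans gXt _; case/andP: FX.
pose z := g *m pinvmx F.
have zF : z *m F = g by exact: mulmxKpV.
pose y := z *m aE M i.
have gE : g *m aE N i = g by rewrite /g -mulmxA -(proj1 homG) mulmxA mE.
have yF : y *m F = g by rewrite /y -mulmxA (proj1 homF) mulmxA zF gE.
have yE : y *m aE M i = y by rewrite /y -mulmxA EE.
have yB : (y <= Bm m)%MS by apply: submx_trans (submx1 _) Bf.
pose beta := y *m pinvmx (Bm m).
have ybeta : beta *m Bm m = y by exact: mulmxKpV.
pose q := \sum_(p < l.+1) beta 0 p *: aX M ^+ p.
have mq : m *m q = y.
  rewrite -ybeta [RHS]mulmx_sum_row /q mulmx_sumr; apply: eq_bigr => p _.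
  by rewrite rowK scalemxAr.
have qX : aX M *m q = q *m aX M.
  rewrite /q mulmx_sumr mulmx_suml; apply: eq_bigr => p _.
  by rewrite -scalemxAr -scalemxAl XS XSr.
pose K := \sum_(r < n) aE M r *m q *m aE M r.
have EK r : aE M r *m K = aE M r *m q *m aE M r.
  rewrite /K mulmx_sumr (bigD1 r) //= big1 ?addr0; first by rewrite !mulmxA EE.
  by move=> s rs; rewrite !mulmxA aE_orth eq_sym (negbTE rs) !mul0mx.
have KE r : K *m aE M r = aE M r *m q *m aE M r.
  rewrite /K mulmx_suml (bigD1 r) //= big1 ?addr0; first by rewrite -mulmxA EE.
  by move=> s sr; rewrite -mulmxA aE_orth (negbTE sr) mulmx0.
have homK : is_hom K.
  split; first by move=> r; rewrite EK KE.
  rewrite /K mulmx_sumr mulmx_suml (reindex_inj (@ordS_inj n)) /=.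
  apply: eq_bigr => r _.
  by rewrite !mulmxA XE -(mulmxA (aE M r) (aX M) q) qX mulmxA -(mulmxA _ (aX M)) XE mulmxA.
have mK : m *m K = y.
  rewrite /K mulmx_sumr (bigD1 i) //= big1 ?addr0.
    by rewrite !mulmxA mE mq yE.
  by move=> s si; rewrite -{1}mE !mulmxA -(mulmxA m) aE_orth eq_sym (negbTE si) mulmx0 !mul0mx.
have GKF : G = K *m F.
  apply: (Bm_inj Bf); apply/row_matrixP => p.
  rewrite !rowBmA //; last exact: hom_comp.
  by rewrite mulmxA mK yF.
exists P, (K *m G1), H1; split => //; split; first exact: hom_comp.
by split => //; rewrite GKF FGH mulmxA.
Qed.
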